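(* Let $p$ be a prime, $q$ a power of $p$, $F$ a field of characteristic $p$ containing $\mathbb{F}_q$, and $L\in F[x]$ a $q$-polynomial of $q$-degree $n$ with no repeated roots in its splitting field $E$ over $F$; let $v_1,\dots,v_n$ be an ordered $\mathbb{F}_q$-basis of the space of roots of $L$. For $r\geq1$ let $\epsilon_r:H_{n,r}(\mathbb{F}_q)\to E$, $\epsilon_r(P)=P(v_1,\dots,v_n)$. If $\epsilon_r$ is not injective, then $\epsilon_t$ is not injective for all $t\geq r$.
   Context: $H_{n,r}(\mathbb{F}_q)$ is the space of homogeneous polynomials of degree $r$ in $\mathbb{F}_q[x_1,\dots,x_n]$ together with $0$. A $q$-polynomial of $q$-degree $n$ is $\sum_{i=0}^n a_ix^{q^i}$ with $a_n\neq0$. *)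

(* Defs.v *)
From HB Require Import structures.
From mathcomp Require Import all_boot all_order all_algebra all_field.
From mathcomp Require Import mpoly.
Set Implicit Arguments. Unset Strict Implicit. Unset Printing Implicit Defensive.
Import GRing.Theory.
Local Open Scope ring_scope.

Definition q_poly (F : fieldType) (q n : nat) (a : nat -> F) : {poly F} :=
  \sum_(i < n.+1) a i *: 'X^(q ^ i).

Definition no_repeated_roots (E : fieldType) (P : {poly E}) : Prop :=
  exists2 rs : seq E, uniq rs & P %= \prod_(r <- rs) ('X - r%:P).

Definition eps (Fq E : fieldType) (emb : Fq -> E) (n : nat) (v : 'I_n -> E)
  (P : {mpoly Fq[n]}) : E := (map_mpoly emb P).@[v].

Definition eps_injective (Fq E : fieldType) (emb : Fq -> E) (n : nat)
  (v : 'I_n -> E) (r : nat) : Prop :=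
  forall P Q : {mpoly Fq[n]}, P \is r.-homog -> Q \is r.-homog ->
    eps emb v P = eps emb v Q -> P = Q.

(* Main.v *)
Require Import Defs.
From HB Require Import structures.
From mathcomp Require Import all_boot all_order all_algebra all_field.
From mathcomp Require Import mpoly.
Import GRing.Theory.
Local Open Scope ring_scope.

Theorem lemma7p1
  (p q k : nat) (Fq : finFieldType) (F : fieldType) (E : fieldExtType F)
  (iota : {rmorphism Fq -> F}) (n : nat) (a : nat -> F) (v : 'I_n -> E) :
  prime p -> (0 < k)%N -> q = (p ^ k)%N ->
  p \in [pchar F] ->
  #|Fq| = q ->
  a n != 0 ->
  (* E is the splitting field of L over F *)
  splittingFieldFor 1%VS (map_poly (in_alg E) (q_poly q n a)) fullv ->
  no_repeated_roots (map_poly (in_alg E) (q_poly q n a)) ->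
  (* v_1, ..., v_n is an ordered F_q-basis of the roots of L in E *)
  (forall i, root (map_poly (in_alg E) (q_poly q n a)) (v i)) ->
  (forall c : 'I_n -> Fq,
     \sum_(i < n) in_alg E (iota (c i)) * v i = 0 -> forall i, c i = 0) ->
  (forall x : E, root (map_poly (in_alg E) (q_poly q n a)) x ->
     exists c : 'I_n -> Fq, x = \sum_(i < n) in_alg E (iota (c i)) * v i) ->
  forall r : nat, (1 <= r)%N ->
  ~ eps_injective (fun c => in_alg E (iota c)) v r ->
  forall t : nat, (r <= t)%N ->
  ~ eps_injective (fun c => in_alg E (iota c)) v t.
Proof.
move=> _ _ _ _ _ _ _ _ _ _ _ r r1 hr t hrt hinj; apply: hr => P Q hP hQ he.
pose h : {rmorphism Fq -> E} := (in_alg E \o iota)%FUN.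
have hmap : forall R : {mpoly Fq[n]}, map_mpoly (fun c => in_alg E (iota c)) R = map_mpoly h R by [].
case: n v P Q hP hQ he hinj hmap => [|n'] v P Q hP hQ he hinj hmap.
  apply/eqP; rewrite -subr_eq0; apply/eqP.
  apply/eqP/negP => /negP nz.
  have hR : P - Q \is r.-homog by apply: rpredB.
  have /dhomogP/(_ _ (mlead_supp nz)) := hR.
  have -> : mlead (P - Q) = 0%MM by apply/mnmP => -[].
  move=> r0; have := @mdeg0 0; rewrite r0 => r00; by rewrite r00 in r1.
have nzX1 : ('X_ord0 : {mpoly Fq[n'.+1]}) != 0.
  apply/eqP => h0; have := mcoeffXU Fq (@ord0 n') ord0; rewrite h0 mcoeff0 eqxx => /esym/eqP.
  by rewrite oner_eq0.
have nzX : ('X_ord0 : {mpoly Fq[n'.+1]}) ^+ (t - r) != 0 by rewrite expf_neq0.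
have hX1 : ('X_ord0 : {mpoly Fq[n'.+1]}) \is 1.-homog.
  by rewrite dhomogX; apply/eqP; exact: mdeg1.
have hX : ('X_ord0 : {mpoly Fq[n'.+1]}) ^+ (t - r) \is (t - r).-homog.
  by have := dhomogMn (t - r) hX1; rewrite mul1n.
apply: (mulIf nzX) => /=; apply: hinj.
- by have := dhomogM hP hX; rewrite subnKC.
- by have := dhomogM hQ hX; rewrite subnKC.
- rewrite /eps !hmap !rmorphM /=; congr (_ * _); move: he; rewrite /eps !hmap; exact: id.
Qed.
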